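(* Let $m\ge1$ and let $\Sigma$ be an alphabet with $|\Sigma|=m$. If $m\le 2$, then for every antimorphic involution $\theta$ on $\Sigma^*$ there is no infinite word over $\Sigma$ that is pseudo-cube-free with respect to $\theta$. If $m\ge 3$, then for every antimorphic involution $\theta$ on $\Sigma^*$ there exists an infinite word over $\Sigma$ that is pseudo-cube-free with respect to $\theta$.
   Context: A function $\theta:\Sigma^*\to\Sigma^*$ is an antimorphic involution if $\theta(uv)=\theta(v)\theta(u)$ and $\theta(\theta(w))=w$ for all words $u,v,w$. For an integer $k\ge 2$, a nonempty word $w$ is a pseudo $k$th power with respect to $\theta$ if $w=u_1u_2\cdots u_k$ where for all $1\le i,j\le k$, either $u_i=u_j$ or $u_i=\theta(u_j)$. A pseudo cube is a pseudo $3$rd power. A (finite or infinite) word is pseudo-cube-free with respect to $\theta$ if none of its factors (contiguous subwords) is a pseudo cube with respect to $\theta$. *)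

(* Defs.v *)
From mathcomp Require Import all_boot.
Set Implicit Arguments. Unset Strict Implicit. Unset Printing Implicit Defensive.

Definition antimorphic_involution (Sigma : Type) (theta : seq Sigma -> seq Sigma) : Prop :=
  (forall u v, theta (u ++ v) = theta v ++ theta u) /\
  (forall w, theta (theta w) = w).

Definition pseudo_power (Sigma : eqType) (theta : seq Sigma -> seq Sigma)
    (k : nat) (w : seq Sigma) : Prop :=
  w != [::] /\
  exists us : seq (seq Sigma),
    size us = k /\ flatten us = w /\
    (forall i j, i < k -> j < k ->
       nth [::] us i = nth [::] us j \/ nth [::] us i = theta (nth [::] us j)).

Definition pseudo_cube (Sigma : eqType) (theta : seq Sigma -> seq Sigma) (w : seq Sigma) : Prop :=
  pseudo_power theta 3 w.

Definition factor (Sigma : Type) (f : nat -> Sigma) (i n : nat) : seq Sigma :=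
  mkseq (fun j => f (i + j)) n.

Definition pseudo_cube_free_inf (Sigma : eqType) (theta : seq Sigma -> seq Sigma)
    (f : nat -> Sigma) : Prop :=
  forall i n, ~ pseudo_cube theta (factor f i n).

(* Main.v *)
Require Import Defs.
From mathcomp Require Import all_boot zify.
Set Implicit Arguments. Unset Strict Implicit. Unset Printing Implicit Defensive.

Fixpoint tmf (k n : nat) : bool :=
  if k is k'.+1 then (if n is 0 then false else odd n (+) tmf k' n./2) else false.
Definition tm n := tmf n n.

Lemma tmf_stable k k' n : n <= k -> n <= k' -> tmf k n = tmf k' n.
Proof.
elim: k k' n => [|k IH] [|k'] [|n] //= H1 H2.
congr (_ (+) _); apply: IH; lia.
Qed.

Lemma tm_half n : tm n = odd n (+) tm n./2.
Proof.
case: n => [|n] //. rewrite /tm /=. congr (_ (+) _); apply: tmf_stable; lia.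
Qed.

Lemma tm_dbl (r : bool) m : tm (r + m.*2) = r (+) tm m.
Proof. rewrite tm_half half_bit_double; congr (_ (+) _); lia. Qed.

Lemma tm_pair n : ~~ odd n -> tm n.+1 = ~~ tm n.
Proof.
move=> Hn. have E : n = false + n./2.*2 by lia.
have E1 : n.+1 = true + n./2.*2 by lia.
by rewrite E1 {2}E !tm_dbl.
Qed.

Lemma overlap_free p i : 0 < p -> (forall k, k <= p -> tm (i+k) = tm (i+p+k)) -> False.
Proof.
elim/ltn_ind: p i => p IH i p0 H.
case Op: (odd p).
- have alt : forall n, i <= n -> n < i + p -> tm n.+1 = ~~ tm n.
    move=> n H1 H2. case On: (odd n); last by apply: tm_pair; rewrite On.
    have Hk1 := H (n - i) (ltac:(lia)).
    have Hk2 := H (n - i).+1 (ltac:(lia)).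
    have -> : n = i + (n - i) by lia.
    rewrite -addnS Hk2 Hk1 (_ : i + p + (n-i).+1 = (i+p+(n-i)).+1); last lia.
    apply: tm_pair; lia.
  have form : forall k, k <= p -> tm (i + k) = odd k (+) tm i.
    elim => [|k IHk] Hk; first by rewrite addn0.
    rewrite addnS alt; [|lia|lia]. rewrite IHk; last lia. by rewrite -addNb.
  have := H 0 (leq0n _). rewrite !addn0 (form p (leqnn p)) Op.
  by case: (tm i).
- have q0 : 0 < p./2 by lia.
  apply: (IH p./2 _ i./2 q0); first lia.
  move=> j Hj. have := H (j.*2) (ltac:(lia)).
  rewrite (_ : i + j.*2 = odd i + (i./2 + j).*2); last lia.
  rewrite (_ : i + p + j.*2 = odd i + (i./2 + p./2 + j).*2); last lia.
  rewrite !tm_dbl. by move/addbI.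
Qed.

Definition dd n : nat := if tm n == tm n.+1 then 0 else if tm n then 1 else 2.

Lemma dd_le n : dd n <= 2.
Proof. rewrite /dd; by case: ifP => //; case: ifP. Qed.

Lemma dd_step n m : dd n = dd m -> tm n = tm m -> tm n.+1 = tm m.+1.
Proof. rewrite /dd. by case: (tm n); case: (tm n.+1); case: (tm m); case: (tm m.+1). Qed.

Lemma dd_step2 n m : dd n = dd m -> tm n != tm m -> tm n.+1 = tm n /\ tm m.+1 = tm m.
Proof. rewrite /dd. by case: (tm n); case: (tm n.+1); case: (tm m); case: (tm m.+1). Qed.

Lemma dd_sqfree p i : 0 < p -> (forall k, k < p -> dd (i+k) = dd (i+p+k)) -> False.
Proof.
move=> p0 H. case E: (tm i == tm (i+p)).
- apply: (overlap_free p0 (i:=i)).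
  elim => [|k IHk] Hk; first by rewrite !addn0; apply/eqP.
  rewrite !addnS; apply: dd_step; first by apply: H.
  by apply: IHk; lia.
- have : forall k, k <= p -> tm (i+k) != tm (i+p+k) /\ tm (i+k) = tm i.
    elim => [|k IHk] Hk; first by rewrite !addn0 E.
    have [A B] := IHk (ltnW Hk).
    have [C D] := dd_step2 (H k Hk) A.
    by rewrite !addnS C D.
  move/(_ p (leqnn p)) => [_ F]. by rewrite F eqxx in E.
Qed.

Section Theta.
Variable (T : eqType) (theta : seq T -> seq T).
Hypothesis Ht : antimorphic_involution theta.

Definition sg (x : T) := head x (theta [:: x]).

Lemma theta_nil : theta [::] = [::].
Proof.
case: Ht => H1 _. have := congr1 size (H1 [::] [::]).
rewrite size_cat /=. case: (theta [::]) => //= a s. lia.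
Qed.

Lemma theta_cons x s : theta (x :: s) = theta s ++ theta [:: x].
Proof. by case: Ht => H1 _; rewrite -(H1 [:: x] s). Qed.

Lemma size_theta1 x : 0 < size (theta [:: x]).
Proof.
case: Ht => _ H2. case E: (theta [:: x]) => //.
by have := H2 [:: x]; rewrite E theta_nil.
Qed.

Lemma size_theta s : size s <= size (theta s).
Proof.
elim: s => //= x s IH. rewrite theta_cons size_cat.
have := size_theta1 x. lia.
Qed.

Lemma theta1 x : theta [:: x] = [:: sg x].
Proof.
case: Ht => _ H2. have := size_theta (theta [:: x]). rewrite H2 /=.
have := size_theta1 x. rewrite /sg. case: (theta [:: x]) => [|a [|b s]] //=.
Qed.

Lemma thetaE s : theta s = rev (map sg s).
Proof.
elim: s => [|x s IH]; first by rewrite theta_nil.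
by rewrite theta_cons IH theta1 /= rev_cons cats1.
Qed.

Lemma sgK x : sg (sg x) = x.
Proof.
case: Ht => _ H2. have := H2 [:: x]. rewrite theta1 theta1. by case.
Qed.
End Theta.

Section PCB.
Variable T : eqType.
Definition pcb (w : seq T) : bool :=
  let l := size w %/ 3 in
  [&& 0 < l, size w == 3 * l &
   let us := [:: take l w; take l (drop l w); drop (l + l) w] in
   all (fun x => all (fun y => (x == y) || (x == rev y)) us) us].

Lemma pcb_sound (theta : seq T -> seq T) w :
  (forall s, theta s = rev s) -> pcb w -> pseudo_cube theta w.
Proof.
move=> Ht /and3P [l0 /eqP Hs Hall]. split.
  by apply/eqP => E; rewrite E /= in Hs l0.
set us := [:: take (size w %/ 3) w; take (size w %/ 3) (drop (size w %/ 3) w);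
          drop (size w %/ 3 + size w %/ 3) w] in Hall *. exists us.
split => //; split.
  by rewrite /= cats0 -drop_drop cat_take_drop cat_take_drop.
move=> i j Hi Hj. have Hi' : i < size us by []. have Hj' : j < size us by [].
move/allP: Hall => /(_ _ (mem_nth [::] Hi')) /allP.
move=> /(_ _ (mem_nth [::] Hj')) /orP [/eqP ->|/eqP ->]; [left|right]; by rewrite ?Ht.
Qed.

End PCB.

Lemma pcb_map (T S : eqType) (g : T -> S) w : injective g -> pcb (map g w) = pcb w.
Proof.
move=> gi. rewrite /pcb size_map -!map_take -!map_drop -!map_take.
rewrite /= -!map_rev !(inj_eq (inj_map gi)). done.
Qed.

Fixpoint words n : seq (seq bool) :=
  if n is n'.+1 then [seq b :: w | b <- [:: true; false], w <- words n'] else [:: [::]].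

Lemma words_mem n w : size w = n -> w \in words n.
Proof.
elim: n w => [|n IH] [|b w] // [Hs].
by apply: (allpairs_f (fun b w => b :: w)); [case: b|apply: IH].
Qed.

Definition has_pc (w : seq bool) :=
  has (fun i => has (fun n => (i + n <= 10) && pcb (take n (drop i w))) (iota 0 11)) (iota 0 11).

Lemma check10 : all has_pc (words 10).
Proof. by vm_compute. Qed.

Lemma fac_nth (T : Type) (d : T) (f : nat -> T) i n s1 s2 s3 k :
  factor f i n = s1 ++ s2 ++ s3 -> k < size s2 -> nth d s2 k = f (i + size s1 + k).
Proof.
move=> E Hk. have Hs := congr1 size E. rewrite /factor size_mkseq !size_cat in Hs.
have := congr1 (fun s => nth d s (size s1 + k)) E => /=.
rewrite /factor nth_mkseq; last lia.
rewrite nth_cat ltnNge leq_addr /= addKn nth_cat Hk addnA => ->. done.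
Qed.

Lemma three (T : finType) (x y z : T) : x != y -> x != z -> y != z -> 3 <= #|T|.
Proof.
move=> xy xz yz. apply/card_geqP. exists [:: x; y; z]; split => //.
by rewrite /= !inE negb_or xy xz yz.
Qed.

Lemma three_ex (T : finType) : 3 <= #|T| ->
  exists x y z : T, [/\ x != y, x != z & y != z].
Proof.
move/card_geqP => [[|x [|y [|z [|? ?]]]] [U S _]] //.
exists x, y, z. move: U; rewrite /= !inE negb_or => /andP [/andP [-> ->] /andP [-> _]].
by [].
Qed.

Lemma pick3 (T : eqType) (e0 e1 e2 a b : T) :
  e0 != e1 -> e0 != e2 -> e1 != e2 -> exists c, c != a /\ c != b.
Proof.
move=> D01 D02 D12.
case/boolP: ((e0 != a) && (e0 != b)) => [/andP[??]|H0]; first by exists e0.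
case/boolP: ((e1 != a) && (e1 != b)) => [/andP[??]|H1]; first by exists e1.
exists e2. move: H0 H1; rewrite !negb_and !negbK => /orP[/eqP E0|/eqP E0] /orP[/eqP E1|/eqP E1];
 subst; rewrite ?eqxx in D01 *; split => //; by rewrite eq_sym.
Qed.
Arguments fac_nth {T} d {f i n s1 s2 s3 k}.

Lemma caseB (T : eqType) (theta : seq T -> seq T) (f : nat -> T) :
  (forall s, theta s = rev s) ->
  (forall i p, 0 < p -> (forall k, k < p -> f (i+k) = f (i+p+k)) -> False) ->
  pseudo_cube_free_inf theta f.
Proof.
move=> Ht Hsq i n [wne [us [Hs [Hf Hc]]]].
case: us Hs Hf Hc => [|u0 [|u1 [|u2 [|? ?]]]] //= _ Hf Hc.
rewrite cats0 in Hf. rewrite -Hf in wne.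
have H01 := Hc 0 1 erefl erefl. have H10 := Hc 1 0 erefl erefl.
have H20 := Hc 2 0 erefl erefl. rewrite /= !Ht in H01 H10 H20.
have u0ne : u0 != [::].
  apply/eqP => E; subst u0. move: wne; case: H10 => ->; case: H20 => -> //.
have Hf' : factor f i n = [::] ++ u0 ++ (u1 ++ u2) by rewrite Hf.
have Hf1 : factor f i n = u0 ++ u1 ++ u2 by rewrite Hf.
case: H01 => E.
- subst u1. apply: (Hsq i (size u0)); first by case: (u0) u0ne.
  move=> k Hk. have := fac_nth (f 0) Hf' Hk. rewrite /= addn0 => <-.
  by rewrite -(fac_nth (f 0) Hf1 Hk).
- have s1 : 0 < size u1 by rewrite -size_rev -E; case: (u0) u0ne.
  have p0 : 0 < size u0 by case: (u0) u0ne.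
  apply: (Hsq (i + size u0).-1 1) => // k Hk.
  have -> : k = 0 by lia.
  rewrite !addn0 (_ : (i + size u0).-1 + 1 = i + size u0 + 0); last lia.
  rewrite -(fac_nth (f 0) Hf1 s1).
  have Hl : (size u0).-1 < size u0 by case: (u0) u0ne.
  have := fac_nth (f 0) Hf' Hl. rewrite /= (_ : i + 0 + (size u0).-1 = (i + size u0).-1); last lia.
  move=> <-. have Hsz : size u0 = size u1 by rewrite E size_rev.
  rewrite {1}E nth_rev; last lia. congr nth; lia.
Qed.

Lemma all_factor (T : eqType) (a c : T) i n :
  all (mem [:: a; c]) (factor (fun n => if tm n then a else c) i n).
Proof. rewrite /factor /mkseq all_map; apply/allP => k _ /=. by case: (tm _); rewrite !inE eqxx ?orbT. Qed.

Lemma thetaAC (T : eqType) theta (a c : T) : antimorphic_involution theta ->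
  sg theta a != a -> c != a -> c != sg theta a -> forall v,
  all (mem [:: a; c]) v -> all (mem [:: a; c]) (theta v) -> theta v = v.
Proof.
move=> Ht sa ca csa v Av Atv.
have Hx : forall x, x \in v -> x = c /\ sg theta c = c.
  move=> x xv. have : sg theta x \in [:: a; c].
    apply: (allP Atv). by rewrite (thetaE Ht) mem_rev map_f.
  move: (allP Av x xv). rewrite !inE => /orP [/eqP ->|/eqP ->].
    by rewrite (negbTE sa) eq_sym (negbTE csa).
  move/orP => [/eqP E|/eqP E] //. have := sgK Ht c. rewrite E => E2.
  by rewrite E2 eqxx in csa.
rewrite (thetaE Ht) map_id_in; last by move=> x /Hx [-> ->].
have /all_pred1P -> : all (pred1 c) v by apply/allP => x /Hx [-> _]; rewrite /= eqxx.
by rewrite rev_nseq.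
Qed.

Lemma caseA (T : eqType) theta (a c : T) : antimorphic_involution theta ->
  sg theta a != a -> c != a -> c != sg theta a ->
  pseudo_cube_free_inf theta (fun n => if tm n then a else c).
Proof.
move=> Ht sa ca csa i n [wne [us [Hs [Hf Hc]]]].
set f := (fun n => if tm n then a else c) in Hf *.
case: us Hs Hf Hc => [|u0 [|u1 [|u2 [|? ?]]]] //= _ Hf Hc.
rewrite cats0 in Hf. rewrite -Hf in wne.
have Al := all_factor a c i n. rewrite -Hf !all_cat in Al.
case/and3P: Al => A0 A1 A2.
have H01 := Hc 0 1 erefl erefl. have H12 := Hc 1 2 erefl erefl. rewrite /= in H01 H12.
have E01 : u0 = u1 by case: H01 => // E; rewrite E (thetaAC Ht sa ca csa A1) // -E.
have E12 : u1 = u2 by case: H12 => // E; rewrite E (thetaAC Ht sa ca csa A2) // -E.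
subst u1 u2.
have u0ne : 0 < size u0 by case: (u0) wne.
have Hf0 : factor f i n = [::] ++ u0 ++ (u0 ++ u0) by rewrite Hf.
have Hf1 : factor f i n = u0 ++ u0 ++ u0 by rewrite Hf.
have Hf2 : factor f i n = (u0 ++ u0) ++ u0 ++ [::] by rewrite -catA cats0 Hf.
have ginj : forall x y, (if x then a else c) = (if y then a else c) -> x = y.
  by case; case => // E; rewrite E eqxx in ca.
apply: (overlap_free u0ne (i := i)) => k Hk.
apply: ginj. rewrite -/(f (i+k)) -/(f (i + size u0 + k)).
case: (ltnP k (size u0)) => Hk2.
  rewrite -(fac_nth a Hf1 Hk2). have := fac_nth a Hf0 Hk2. by rewrite /= addn0 => <-.
have -> : k = size u0 by lia.
rewrite (_ : i + size u0 = i + size u0 + 0); last by rewrite addn0.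
rewrite -(fac_nth a Hf1 u0ne) (_ : i + size u0 + 0 + size u0 = i + size (u0 ++ u0) + 0); last by rewrite size_cat; lia.
by rewrite -(fac_nth a Hf2 u0ne).
Qed.

Lemma take_drop_mkseq (T : Type) (h : nat -> T) N i n : i + n <= N ->
  take n (drop i (mkseq h N)) = factor h i n.
Proof.
move=> H. have d := h 0. apply: (@eq_from_nth _ d).
  rewrite /factor size_mkseq size_takel // size_drop size_mkseq; lia.
move=> k. rewrite size_takel ?size_drop ?size_mkseq => [Hk|]; last lia.
rewrite nth_take; last lia. rewrite nth_drop /factor !nth_mkseq //; lia.
Qed.

Theorem mainTheorem2 (m : nat) (Sigma : finType) :
  1 <= m -> #|Sigma| = m ->
  (m <= 2 ->
     forall theta : seq Sigma -> seq Sigma, antimorphic_involution theta ->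
       ~ exists f : nat -> Sigma, pseudo_cube_free_inf theta f) /\
  (3 <= m ->
     forall theta : seq Sigma -> seq Sigma, antimorphic_involution theta ->
       exists f : nat -> Sigma, pseudo_cube_free_inf theta f).
Proof.
move=> m1 Hm; split.
- move=> m2 theta Ht [f Hfree].
  have no3 : forall x y z : Sigma, x != y -> x != z -> y != z -> False.
    move=> x y z xy xz yz. have := three xy xz yz. lia.
  case/boolP: [forall x, [forall y, (x == y) || (x == sg theta y)]] => [/forallP H | H].
  + apply: (Hfree 0 3). split; first by [].
    have key : forall x y, [:: x] = [:: y] \/ [:: x] = theta [:: y].
      move=> x y. rewrite (theta1 Ht). by move/forallP: (H x) => /(_ y) /orP [/eqP ->|/eqP ->]; [left|right].
    exists [:: [:: f 0]; [:: f 1]; [:: f 2]]. split => //; split => //.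
    move=> i j Hi Hj.
    by case: i Hi => [|[|[|]]] // _; case: j Hj => [|[|[|]]] // _; apply: key.
  + move/forallPn: H => [x /forallPn [y]]; rewrite negb_or => /andP [xy xsy].
    have sy : sg theta y = y.
      apply/eqP; apply/negPn/negP => ysy. by apply: (no3 x y (sg theta y)); rewrite // eq_sym.
    have all2 : forall z, (z == x) || (z == y).
      move=> z. apply/negPn/negP; rewrite negb_or => /andP [zx zy].
      by apply: (no3 x y z); rewrite // eq_sym.
    have sx : sg theta x = x.
      case/orP: (all2 (sg theta x)) => /eqP // E.
      have := sgK Ht x. rewrite E sy => E2. by rewrite E2 eqxx in xy.
    have sid : forall z, sg theta z = z.
      by move=> z; case/orP: (all2 z) => /eqP ->.
    have Hth : forall l, theta l = rev l.
      by move=> l; rewrite (thetaE Ht) map_id_in // => z _; apply: sid.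
    pose h n := f n == x. pose g (b : bool) := if b then x else y.
    have ginj : injective g by case; case => //= E; rewrite E eqxx in xy.
    have fgh : forall n, f n = g (h n).
      move=> n. rewrite /g /h. case: ifP => [/eqP //|Hnx].
      case/orP: (all2 (f n)) => /eqP E //. by rewrite E eqxx in Hnx.
    have := allP check10 (mkseq h 10) (words_mem (size_mkseq h 10)).
    case/hasP => i _ /hasP [n _ /andP [Hin Hp]].
    apply: (Hfree i n). apply: (pcb_sound Hth).
    have -> : factor f i n = map g (factor h i n).
      by rewrite /factor /mkseq -map_comp; apply: eq_map => k; rewrite /= fgh.
    by rewrite pcb_map // -(take_drop_mkseq h (N := 10)) //.
- move=> m3 theta Ht.
  have [e0 [e1 [e2 [D01 D02 D12]]]] : exists x y z : Sigma, [/\ x != y, x != z & y != z].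
    by apply: three_ex; rewrite Hm.
  case/boolP: [exists x, sg theta x != x] => [/existsP [a sa]|H].
  + have [c [ca csa]] := pick3 a (sg theta a) D01 D02 D12.
    exists (fun n => if tm n then a else c). exact: caseA.
  + have sid : forall z, sg theta z = z.
      move=> z. apply/eqP. move/existsPn: H => /(_ z). by rewrite negbK.
    have Hth : forall l, theta l = rev l.
      by move=> l; rewrite (thetaE Ht) map_id_in // => z _; apply: sid.
    pose E k := if k == 0 then e0 else if k == 1 then e1 else e2.
    exists (fun n => E (dd n)). apply: (caseB Hth) => i p p0 Hk.
    apply: (dd_sqfree p0 (i := i)) => k kp. have := Hk k kp.
    move: (dd_le (i+k)) (dd_le (i+p+k)); rewrite /E.
    case: (dd (i+k)) => [|[|[|?]]] //; case: (dd (i+p+k)) => [|[|[|?]]] // _ _ /eqP;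
      by rewrite ?(negbTE D01) ?(negbTE D02) ?(negbTE D12) ?(eq_sym e1 e0) ?(eq_sym e2 e0) ?(eq_sym e2 e1) ?(negbTE D01) ?(negbTE D02) ?(negbTE D12).
Qed.
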